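(* Let $S=\langle n_1<n_2<\cdots<n_e\rangle$ be a numerical semigroup with $\mathrm{msg}(S)=\{n_1<\cdots<n_e\}$, $n_1\geq 3$ and $e\geq 2$. If $S$ is a MANS-semigroup such that $n_e\bmod n_1<n_1-1$, then $n_e+1$ is suitably monotone for $S$.
   Context: $\mathbb{N}=\{0,1,2,\ldots\}$. A numerical semigroup is a subset $S\subseteq\mathbb{N}$ closed under addition, containing $0$, with finite complement; $\langle A\rangle$ is the submonoid generated by $A$; $\mathrm{msg}(S)$ is its unique finite minimal system of generators. For $n\in S\setminus\{0\}$, $\mathrm{Ap}(S,n)=\{s\in S:s-n\notin S\}=\{w(0),\ldots,w(n-1)\}$ with $w(i)$ the least element of $S$ congruent to $i$ mod $n$. $S$ is a MANS-semigroup if $w(1)<\cdots<w(\mathrm{m}(S)-1)$ for $\mathrm{Ap}(S,\mathrm{m}(S))$, $\mathrm{m}(S)$ the least element of $S\setminus\{0\}$. For a MANS-semigroup $S$ with $\mathrm{msg}(S)=\{n_1<\cdots<n_e\}$, $e\geq2$, and $\mathrm{Ap}(S,n_1)=\{w(0),\ldots,w(n_1-1)\}$, $n\in\mathbb{N}$ is suitably monotone for $S$ if (i) $n_e<n$, (ii) $n_e\bmod n_1<n\bmod n_1$, and (iii) $w(n\bmod n_1-1)<n<w(n\bmod n_1)$. $a\bmod b$ is the remainder of the division of $a$ by $b$. *)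

(* Defs.v *)
From mathcomp Require Import all_boot.
Set Implicit Arguments. Unset Strict Implicit. Unset Printing Implicit Defensive.

Definition numerical_semigroup (S : nat -> Prop) : Prop :=
  [/\ S 0,
      (forall x y, S x -> S y -> S (x + y)) &
      exists F, forall x, F < x -> S x].

Inductive gen (A : nat -> Prop) : nat -> Prop :=
  | gen0 : gen A 0
  | genS a x : A a -> gen A x -> gen A (a + x).

Definition generates (A : nat -> Prop) (S : nat -> Prop) : Prop :=
  forall x, S x <-> gen A x.

Definition is_msg (S : nat -> Prop) (ns : seq nat) : Prop :=
  generates (fun x => x \in ns) S /\
  forall B : nat -> Prop, (forall x, B x -> x \in ns) -> generates B S ->
    forall x, x \in ns -> B x.

Definition is_multiplicity (S : nat -> Prop) (m : nat) : Prop :=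
  [/\ S m, 0 < m & forall s, S s -> 0 < s -> m <= s].

(* w lists Ap(S,n): for every i < n, w i is the least element of S
   congruent to i modulo n. *)
Definition apery_fun (S : nat -> Prop) (n : nat) (w : nat -> nat) : Prop :=
  forall i, i < n ->
    [/\ S (w i), w i %% n = i & forall s, S s -> s %% n = i -> w i <= s].

Definition MANS (S : nat -> Prop) : Prop :=
  forall m w, is_multiplicity S m -> apery_fun S m w ->
    forall i j, 1 <= i -> i < j -> j <= m - 1 -> w i < w j.

(* n is suitably monotone for S, where msg(S) = {n_1 < ... < n_e} is given by
   the increasing list ns (n_1 = head, n_e = last). *)
Definition suitably_monotone (S : nat -> Prop) (ns : seq nat) (n : nat) : Prop :=
  let n1 := nth 0 ns 0 in
  let ne := last 0 ns in
  forall w, apery_fun S n1 w ->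
    [/\ ne < n,
        ne %% n1 < n %% n1 &
        w (n %% n1 - 1) < n < w (n %% n1)].

(* Main.v *)
Require Import Defs.
From mathcomp Require Import all_boot.
From mathcomp Require Import zify.

Lemma modeq_diff d x y : x %% d = y %% d -> x <= y -> exists k, y = x + k * d.
Proof.
move=> Hm Hxy.
have : (y == x %[mod d]) by rewrite Hm.
rewrite eqn_mod_dvd // => /dvdnP [k Hk]; exists k; rewrite -Hk; lia.
Qed.

Lemma mod_pred d x r : r.+1 < d -> x.+1 %% d = r.+1 -> x %% d = r.
Proof.
move=> Hr H.
have Hd : 0 < d by lia.
have E : x.+1 %% d = (x %% d).+1 %% d by rewrite -addn1 -modnDml addn1.
have Hlt := ltn_pmod x Hd.
case: (ltnP (x %% d).+1 d) => h.
  by move: H; rewrite E modn_small // => -[].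
have e : (x %% d).+1 = d by lia.
by move: H; rewrite E e modnn.
Qed.

Lemma gen_add A x y : gen A x -> gen A y -> gen A (x + y).
Proof. elim=> [|a x' Ha _ IH] Hy //; rewrite -addnA; exact: (genS Ha (IH Hy)). Qed.

Lemma gen_mono (A B : nat -> Prop) x : (forall a, A a -> B a) -> gen A x -> gen B x.
Proof. move=> H; elim=> [|a x' Ha _ IH]; [exact: gen0| exact: genS (H _ Ha) IH]. Qed.

Lemma path_le_last n1 s : path ltn n1 s -> forall x, x \in n1 :: s -> x <= last n1 s.
Proof.
elim: s n1 => [|y t IH] n1 /=.
  by move=> _ x; rewrite inE => /eqP ->.
move=> /andP [h1 h2] x; rewrite inE => /orP [/eqP ->|hx].
  have := IH y h2 y; rewrite inE eqxx /= => /(_ isT); lia.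
exact: IH.
Qed.

Theorem proposition4p13 (S : nat -> Prop) (ns : seq nat) :
  numerical_semigroup S ->
  is_msg S ns ->
  sorted ltn ns ->
  2 <= size ns ->
  3 <= nth 0 ns 0 ->
  MANS S ->
  last 0 ns %% nth 0 ns 0 < nth 0 ns 0 - 1 ->
  suitably_monotone S ns (last 0 ns + 1).
Proof.
case: ns => [|n1 s] //= [S0 Sadd _] [Hgen Hmin] Hsort Hsz H3 HM Hr.
set ne := last n1 s in Hr *.
have Hle : forall x, x \in n1 :: s -> x <= ne by exact: path_le_last.
have Hall : all (ltn n1) s := order_path_min ltn_trans Hsort.
have Hne_in : ne \in n1 :: s by exact: mem_last.
have Hn1ne : n1 < ne.
  rewrite /ne; clear -Hsz Hall; case: s Hsz Hall => [|y t] // _ Hall.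
  have : last y t \in y :: t by exact: mem_last.
  by move/(allP Hall).
have Hmin1 : forall x, x \in n1 :: s -> n1 <= x.
  move=> x; rewrite inE => /orP [/eqP -> //|hx]; have /= h := allP Hall x hx; exact: ltnW.
have Hmult : is_multiplicity S n1.
  split; last 2 first. lia.
  - move=> x /Hgen; elim=> [|a x' Ha _ IH] //= _; have := Hmin1 a Ha; lia.
  - apply/Hgen; rewrite -[n1]addn0; apply: genS; last exact: gen0. by rewrite addn0 mem_head.
have [Sn1 n1pos Sge] := Hmult.
have Smul : forall x k, S x -> S (x + k * n1).
  move=> x k Sx; elim: k => [|k IH]; first by rewrite addn0.
  by rewrite mulSn addnCA; apply: Sadd.
have NS : forall a c, S a -> S c -> 0 < a -> 0 < c -> a + c <> ne.
  move=> a c Sa Sc a0 c0 E.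
  pose B := fun x => x \in n1 :: s /\ x <> ne.
  have Blt : forall y, gen (fun x => x \in n1 :: s) y -> y < ne -> gen B y.
    move=> y; elim=> [|g y' Hg _ IH] h; first exact: gen0.
    apply: genS; last by apply: IH; lia.
    split => //; lia.
  have Bne : gen B ne.
    rewrite -E; apply: gen_add; apply: Blt; try apply/Hgen => //; lia.
  have HB : generates B S.
    move=> x; split.
      move/Hgen; elim=> [|g y' Hg _ IH]; first exact: gen0.
      case: (eqVneq g ne) => [->|hne]; first exact: gen_add.
      by apply: genS => //; split => //; apply/eqP.
    move=> h; apply/Hgen; apply: gen_mono h; by move=> ? [].
  have := Hmin B (fun x h => proj1 h) HB ne Hne_in.
  by case.
rewrite /suitably_monotone /= -/ne => w Hw.
set r := ne %% n1 in Hr *.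
have n1gt : 0 < n1 by lia.
have Er1 : (ne + 1) %% n1 = r.+1 by rewrite -modnDml modn_small ?addn1 //; lia.
rewrite Er1 subn1 /=.
have r1 : 1 <= r.
  case: (posnP r) => // r0; exfalso.
  have [k Hk] : exists k, ne = 0 + k * n1 by apply: modeq_diff => //; rewrite mod0n.
  have k2 : 2 <= k by move: Hk Hn1ne; case: k => [|[|k]] //=; lia.
  apply: (NS n1 (0 + k.-1 * n1)) => //.
  - by apply: Smul.
  - rewrite add0n muln_gt0; apply/andP; split; lia.
  - rewrite Hk; case: k k2 {Hk} => [|[|k]] //= _; rewrite !mulSn; lia.
have [Swr wrr wrmin] := Hw r ltac:(lia).
have wr0 : 0 < w r by case: (posnP (w r)) wrr => // ->; rewrite mod0n; lia.
have Ewr : w r = ne.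
  have Sne : S ne by apply/Hgen; rewrite -[ne]addn0; apply: genS => //; exact: gen0.
  have [k Hk] : exists k, ne = w r + k * n1 by apply: modeq_diff; [exact: wrr | exact: wrmin].
  case: k Hk => [|k] Hk; first by lia.
  exfalso; apply: (NS n1 (w r + k * n1)) => //; first exact: Smul.
    lia.
  rewrite Hk mulSn; lia.
have [Swr1 wr1r wr1min] := Hw r.+1 ltac:(lia).
have Hlt : w r < w r.+1 by apply: (HM n1 w Hmult Hw); lia.
have Hne1 : w r.+1 <> ne + 1.
  move=> E.
  have Sne1 : S (ne + 1) by rewrite -E.
  move/Hgen: Sne1; move Ev : (ne + 1) => v Hv.
  case: Hv Ev => [|a b Ha Hb] Ev; first lia.
  have Sb : S b by apply/Hgen.
  have Sa : S a by apply/Hgen; rewrite -[a]addn0; apply: genS => //; exact: gen0.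
  have a0 := Hmin1 a Ha.
  have ale := Hle a Ha.
  have Eab : (a + b) %% n1 = r.+1 by rewrite -Ev.
  have bl := ltn_pmod b n1gt.
  set j := b %% n1 in bl.
  case: (posnP j) => j0.
    case: (posnP b) => b0; first lia.
    have [k Hk] : exists k, b = 0 + k * n1 by apply: modeq_diff => //; rewrite mod0n.
    case: k Hk => [|k] Hk; first lia.
    have Hm : (a + k * n1) %% n1 = r.+1.
      rewrite -(modnDr (a + k * n1)) -Eab Hk; congr (_ %% _); rewrite mulSn; lia.
    have := wr1min _ (Smul _ k Sa) Hm; rewrite E; rewrite mulSn in Hk; lia.
  case: (eqVneq j 1) => j1.
    have Ea : a %% n1 = r.
      apply: mod_pred; first lia.
      by rewrite -Eab -addn1 -[RHS]modnDmr -/j j1.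
    have := wrmin a Sa Ea.
    have := Sge b Sb; move=> h1 h2; rewrite Ewr in h2; clear -h1 h2 ale Ev H3; lia.
  have jl1 : j.-1 < n1 by clear -bl; lia.
  have [Swj wjr wjmin] := Hw j.-1 jl1.
  have j2 : 2 <= j by clear -j0 j1; move/eqP: j1; lia.
  have Hwj : w j.-1 < w j by apply: (HM n1 w Hmult Hw); clear -j2 bl; lia.
  have [_ _ wjmin'] := Hw j bl.
  have wjb := wjmin' b Sb erefl.
  have Ec : (a + w j.-1) %% n1 = r.
    apply: mod_pred; first by clear -Hr; lia.
    rewrite -Eab -addn1 -addnA -modnDmr -(modnDml (w j.-1)) wjr addn1 prednK; last by clear -j2; lia.
    by rewrite /j modn_mod modnDmr.
  have := wrmin _ (Sadd _ _ Sa Swj) Ec.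
  have wj0 : 0 < w j.-1.
    case: (posnP (w j.-1)) wjr => // ->; rewrite mod0n => h0; exfalso; clear -h0 j2; lia.
  move=> h; apply: (NS a (w j.-1)) => //; first by clear -a0 H3; lia.
  rewrite Ewr in h; clear -h Ev Hwj wjb; lia.
have Hgt : ne + 1 < w r.+1.
  rewrite Ewr in Hlt; clear -Hlt Hne1; lia.
rewrite Ewr; split; [lia | lia | apply/andP; split => //; lia].
Qed.
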